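(* Let $\mathcal{C}$ be a finite or countable alphabet with letter probabilities $(p_\alpha)_{\alpha\in\mathcal{C}}$, $0<p_\alpha<1$, $\sum_\alpha p_\alpha=1$, and let $\mathbb{P}$ be the product measure with these identically distributed marginals. Let $n$ be a positive integer and $k$ a positive integer with $k\le\lfloor n/2\rfloor-1$. Then $\mathbb{P}\Big(\bigcup_{j=k}^{\lfloor n/2\rfloor-1}R_n(j)\Big)=\mathbb{P}\Big(\bigcup_{j=k}^{\lfloor n/2\rfloor-1}R_{2(\lfloor n/2\rfloor-1)}(j)\Big)$.
   Context: $\mathbb{P}(x_1^m)=\prod_{i=1}^m p_{x_i}$ on $\mathcal{C}^m$; $x_a^b=(x_a,\dots,x_b)$. For $1\le j\le m-1$, $R_m(j)=\{x_1^m\in\mathcal{C}^m: x_1^j=x_{m-j+1}^m\}$. *)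

(* Defs.v *)
From HB Require Import structures.
From mathcomp Require Import all_boot all_order all_algebra.
From mathcomp Require Import all_classical all_reals all_analysis.
Set Implicit Arguments. Unset Strict Implicit. Unset Printing Implicit Defensive.
Import Order.TTheory GRing.Theory Num.Theory.
Local Open Scope classical_set_scope.
Local Open Scope ring_scope.

(* R_m(j) = { x : x_1^j = x_{m-j+1}^m } : prefix of length j equals suffix of length j. *)
Definition Rset (T : eqType) (m j : nat) : set (m.-tuple T) :=
  [set x | take j (val x) = drop (m - j) (val x)].
Arguments Rset T m j : clear implicits.

(* Product measure with marginals p on T^m (T countable):
   P(A) = sum over words x in A of prod_i p_{x_i}, as an extended-real sum. *)
Definition Pword (R : realType) (T : choiceType) (p : T -> R) (m : nat)
  (A : set (m.-tuple T)) : \bar R :=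
  (\esum_(x in A) (\prod_(a <- val x) p a)%:E)%E.

(* Main.v *)
Require Import Defs.
From HB Require Import structures.
From mathcomp Require Import all_boot all_order all_algebra.
From mathcomp Require Import all_classical all_reals all_analysis.
Import Order.TTheory GRing.Theory Num.Theory.
Local Open Scope classical_set_scope.
Local Open Scope ring_scope.
From mathcomp Require Import zify.

Lemma esumZl (R : realType) (T : choiceType) (S : set T) (a : T -> \bar R) (c : R) :
  0 <= c -> (forall x, S x -> (0 <= a x)%E) ->
  (\esum_(x in S) (c%:E * a x) = c%:E * \esum_(x in S) a x)%E.
Proof.
move=> c0 a0; rewrite /esum -ereal_supZl //; last first.
  by apply/set0P; exists (\sum_(x \in set0) a x)%E; exists set0 => //; exact: fsets_set0.
have H A : finite_set A -> A `<=` S ->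
  (c%:E * \sum_(x \in A) a x = \sum_(x \in A) (c%:E * a x))%E.
  move=> Af AS; rewrite !fsbig_finite // big_seq [in RHS]big_seq ge0_sume_distrr // => x.
  by rewrite in_fset_set // inE => /AS /a0.
congr ereal_sup; apply/seteqP; split => y /= [A A1 <-].
- by case: A1 => Af AS; exists (\sum_(x \in A) a x)%E; [exists A | rewrite H].
- by case: A1 => B [Bf BS] <-; exists B => //; rewrite H.
Qed.
Lemma prod_ge0 (R : realType) (T : Type) (p : T -> R) (hp : forall a, 0 < p a < 1) (s : seq T) :
  0 <= \prod_(a <- s) p a.
Proof. by apply: prodr_ge0 => a _; case/andP: (hp a) => /ltW. Qed.

Lemma Wtot (R : realType) (T : countType) (p : T -> R)
  (hp : forall a, 0 < p a < 1)
  (hsum : (\esum_(a in [set: T]) (p a)%:E = 1)%E) r :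
  (\esum_(x in [set: r.-tuple T]) (\prod_(a <- val x) p a)%:E = 1)%E.
Proof.
elim: r => [|r IH].
  have -> : [set: 0.-tuple T] = [set [tuple]].
    by apply/seteqP; split => x //= _; rewrite tuple0.
  by rewrite esum_set1 // big_nil.
rewrite (@reindex_esum _ _ _ ([set: T] `*`` (fun _ => [set: r.-tuple T]))
   _ (fun q => [tuple of q.1 :: val q.2])); last first.
  split.
  - by [].
  - by move=> [a t] [b u] _ _ /(congr1 val) [-> /val_inj ->].
  - move=> x _; exists (thead x, behead_tuple x) => //=.
    by apply: val_inj => /=; rewrite [in RHS](tuple_eta x).
under eq_esum do rewrite /= big_cons EFinM.
rewrite -(@esum_esum _ _ _ _ _ (fun a (t : r.-tuple T) => (p a)%:E * (\prod_(b <- val t) p b)%:E)%E) /=; last first.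
  by move=> a t _ _; rewrite -EFinM lee_fin mulr_ge0 ?prod_ge0 //; case/andP: (hp a) => /ltW.
rewrite -[RHS]hsum; apply: eq_esum => a _.
rewrite esumZl ?IH ?mule1 //; last by move=> t _; rewrite lee_fin prod_ge0.
by case/andP: (hp a) => /ltW.
Qed.
Lemma key (T : eqType) (mid : seq T) (a b : seq T) L j : size a = L -> size b = L -> (j <= L)%N ->
  (take j (a ++ mid ++ b) == drop (size (a ++ mid ++ b) - j) (a ++ mid ++ b))
  = (take j a == drop (L - j) b).
Proof.
move=> ha hb hj; rewrite takel_cat ?ha // catA.
have -> : (size ((a ++ mid) ++ b) - j = size (a ++ mid) + (L - j))%N.
  rewrite size_cat hb; lia.
by rewrite drop_cat ltnNge leq_addr /= addKn.
Qed.

Lemma Rset_e (T : eqType) n L (y : (2 * L).-tuple T) (z : seq T) j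
  (hsz : size (take L y ++ z ++ drop L y) == n) : (j <= L)%N ->
  Rset T n j (Tuple hsz) <-> Rset T (2 * L) j y.
Proof.
move=> hj; rewrite /Rset /=.
have hy : size y = (2 * L)%N by rewrite size_tuple.
have ht : size (take L y) = L by rewrite size_takel // hy; lia.
have hd : size (drop L y) = L by rewrite size_drop hy; lia.
have E1 := @key _ z _ _ _ _ ht hd hj; rewrite (eqP hsz) in E1.
have E2 := @key _ [::] _ _ _ _ ht hd hj; rewrite /= cat_take_drop hy in E2.
split => /eqP h; apply/eqP.
  by rewrite E2 -E1.
by rewrite E1 -E2.
Qed.

Lemma mainL (R : realType) (T : countType) (p : T -> R)
  (hp : forall a, 0 < p a < 1)
  (hsum : (\esum_(a in [set: T]) (p a)%:E = 1)%E)
  n L (J : set nat) (hL : (2 * L <= n)%N) (hJ : forall j, J j -> (j <= L)%N) :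
  Pword p (\bigcup_(j in J) Rset T n j) =
  Pword p (\bigcup_(j in J) Rset T (2 * L) j).
Proof.
pose m := (2 * L)%N; pose d := (n - m)%N.
have hsz (y : m.-tuple T) (z : d.-tuple T) : size (take L y ++ z ++ drop L y) == n.
  rewrite !size_cat size_takel ?size_drop !size_tuple /d /m; lia.
pose e := fun q : m.-tuple T * d.-tuple T => Tuple (hsz q.1 q.2).
have He (y : m.-tuple T) (z : d.-tuple T) :
  (\bigcup_(j in J) Rset T n j) (e (y, z)) <-> (\bigcup_(j in J) Rset T m j) y.
  split => -[j Jj hj]; exists j => //; move: hj; rewrite Rset_e //; exact: hJ.
rewrite /Pword (@reindex_esum _ _ _ ((\bigcup_(j in J) Rset T m j) `*`` (fun _ => [set: d.-tuple T])) _ e); last first.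
  split.
  - by move=> [y z] [/= hy _]; apply/He.
  - move=> [y1 z1] [y2 z2] _ _ /(congr1 val) /= /eqP.
    rewrite eqseq_cat; last by rewrite !size_takel ?size_tuple //; lia.
    case/andP => /eqP e1; rewrite eqseq_cat ?size_tuple // => /andP[/eqP e2 /eqP e3].
    congr pair; apply: val_inj => //=.
    by rewrite -(cat_take_drop L y1) -(cat_take_drop L y2) e1 e3.
  - move=> x hx.
    have hy : size (take L x ++ drop (n - L) x) == m.
      rewrite size_cat size_takel ?size_drop ?size_tuple /m; lia.
    have hz : size (drop L (take (n - L) x)) == d.
      rewrite size_drop size_takel ?size_tuple /d /m; lia.
    have ex : e (Tuple hy, Tuple hz) = x.
      apply: val_inj => /=.
      rewrite takel_cat ?size_takel ?size_tuple ?take_takel //; try lia.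
      rewrite drop_cat size_takel ?size_tuple; last lia.
      have tt : take L (take (n - L) x) = take L x by rewrite take_takel //; lia.
      by rewrite ltnn subnn drop0 catA -{1}tt !cat_take_drop.
    exists (Tuple hy, Tuple hz) => //; split => //=.
    apply/(He _ (Tuple hz)); rewrite ex; exact: hx.
have hw (q : m.-tuple T * d.-tuple T) :
  ((\prod_(a <- val (e q)) p a)%:E = (\prod_(a <- val q.1) p a)%:E * (\prod_(a <- val q.2) p a)%:E)%E.
  rewrite -EFinM /= !big_cat /= -[in RHS](cat_take_drop L (val q.1)) big_cat /=.
  by rewrite mulrCA mulrC.
under eq_esum => q _ do rewrite hw.
rewrite -(@esum_esum _ _ _ _ _ (fun (y : m.-tuple T) (z : d.-tuple T) => (\prod_(a <- val y) p a)%:E * (\prod_(a <- val z) p a)%:E)%E) /=; last first.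
  by move=> y z _ _; rewrite -EFinM lee_fin mulr_ge0 ?prod_ge0.
apply: eq_esum => y _.
rewrite esumZl ?prod_ge0 //; last by move=> z _; rewrite lee_fin prod_ge0.
by rewrite Wtot // mule1.
Qed.

Theorem lemma3 (R : realType) (T : countType) (p : T -> R)
  (hp : forall a, 0 < p a < 1)
  (hsum : (\esum_(a in [set: T]) (p a)%:E = 1)%E)
  (n k : nat) (hn : (0 < n)%N) (hk : (0 < k)%N) (hkn : (k <= n./2 - 1)%N) :
  Pword p (\bigcup_(j in [set j : nat | (k <= j <= n./2 - 1)%N]) Rset T n j) =
  Pword p (\bigcup_(j in [set j : nat | (k <= j <= n./2 - 1)%N])
             Rset T (2 * (n./2 - 1)) j).
Proof.
apply: mainL => //; last by move=> j /andP[].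
have := odd_double_half n; rewrite -mul2n; lia.
Qed.
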